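(* Let $n\geq 3$ and let $W_n=K_1\vee C_n$ be the wheel of order $n+1$. Then $\gamma_{sR}(W_4)=2$, and $\gamma_{sR}(W_n)=1$ for every $n\neq 4$.
   Context: $C_n$ denotes the cycle on $n$ vertices and $K_1$ the one-vertex graph. The join $G_1\vee G_2$ of two graphs has vertex set $V(G_1)\cup V(G_2)$ (disjoint union) and edge set $E(G_1)\cup E(G_2)\cup\{uv: u\in V(G_1), v\in V(G_2)\}$. For a graph $G=(V,E)$ and $x\in V$, $N_G[x]=\{x\}\cup\{y: xy\in E\}$. A signed Roman dominating function (SRDF) on $G$ is a function $f:V\to\{-1,1,2\}$ such that (a) $\sum_{y\in N_G[x]}f(y)\geq 1$ for every $x\in V$, and (b) every vertex $x$ with $f(x)=-1$ is adjacent to at least one vertex $y$ with $f(y)=2$. The weight of $f$ is $\sum_{x\in V}f(x)$, and $\gamma_{sR}(G)$ is the minimum weight of an SRDF on $G$. *)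

(* Defs.v *)
From mathcomp Require Import all_boot all_order all_algebra.
Set Implicit Arguments. Unset Strict Implicit. Unset Printing Implicit Defensive.
Import Order.TTheory GRing.Theory Num.Theory.
Local Open Scope ring_scope.

(* A (simple) graph on a finite vertex type V is given by its adjacency
   relation adj : rel V (symmetric, irreflexive for the graphs below). *)

Definition cycle_adj (n : nat) : rel 'I_n :=
  fun i j => (val j == (val i).+1 %% n)%N || (val i == (val j).+1 %% n)%N.

Definition K1_adj : rel unit := fun _ _ => false.

Definition join_adj (V1 V2 : finType) (e1 : rel V1) (e2 : rel V2) : rel (V1 + V2) :=
  fun u v => match u, v with
             | inl x, inl y => e1 x y
             | inr x, inr y => e2 x y
             | _, _ => true
             end.

Definition wheel_adj (n : nat) : rel (unit + 'I_n) := join_adj K1_adj (@cycle_adj n).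

Definition closed_nbhd (V : finType) (adj : rel V) (x : V) : {set V} :=
  [set y | (y == x) || adj x y].

Definition is_SRDF (V : finType) (adj : rel V) (f : V -> int) : Prop :=
  (forall x, f x \in [:: -1; 1; 2]) /\
  (forall x, 1 <= \sum_(y in closed_nbhd adj x) f y) /\
  (forall x, f x = -1 -> exists y, adj x y /\ f y = 2).

Definition weight (V : finType) (f : V -> int) : int := \sum_(x : V) f x.

Definition gamma_sR_is (V : finType) (adj : rel V) (k : int) : Prop :=
  (exists f, is_SRDF adj f /\ weight f = k) /\
  (forall f, is_SRDF adj f -> k <= weight f).

(* Main.v *)
Require Import Defs.
From mathcomp Require Import all_boot all_order all_algebra zify.
Set Implicit Arguments. Unset Strict Implicit. Unset Printing Implicit Defensive.
Import Order.TTheory GRing.Theory Num.Theory.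
Local Open Scope ring_scope.

Lemma weightE n (F : unit + 'I_n -> int) :
  weight F = F (inl tt) + \sum_(j < n) F (inr j).
Proof.
rewrite /weight big_sumType /=; congr (_ + _).
by rewrite (big_pred1 tt) // => -[].
Qed.

Lemma hub_sum n (F : unit + 'I_n -> int) :
  \sum_(y in closed_nbhd (@wheel_adj n) (inl tt)) F y = weight F.
Proof.
rewrite /weight; apply: eq_bigl => -[[]|j]; by rewrite !inE.
Qed.

Lemma ordS_val n (i : 'I_n) : val (ordS i) = if i.+1 == n then 0%N else i.+1.
Proof.
rewrite /=; have := ltn_ord i; case: eqP => [->|ne] lt; first by rewrite modnn.
by rewrite modn_small //; lia.
Qed.

Lemma ord_pred_val n (i : 'I_n) : val (ord_pred i) = if i == 0%N :> nat then n.-1 else i.-1.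
Proof.
rewrite /=; have := ltn_ord i; case: i => [[|k] lt] /= _.
  by rewrite add0n modn_small //; lia.
by rewrite modnDr modn_small //; lia.
Qed.

Lemma predS_eq n (i j : 'I_n) : (i == ordS j) = (j == ord_pred i).
Proof. by apply/eqP/eqP => [->|->]; rewrite ?ordSK ?ord_predK. Qed.

Lemma rim_sum n (F : unit + 'I_n -> int) (i : 'I_n) : (2 < n)%N ->
  \sum_(y in closed_nbhd (@wheel_adj n) (inr i)) F y =
  F (inl tt) + (F (inr i) + (F (inr (ordS i)) + F (inr (ord_pred i)))).
Proof.
move=> n3.
have -> : closed_nbhd (@wheel_adj n) (inr i) =
   inl tt |: (inr i |: (inr (ordS i) |: [set inr (ord_pred i)])).
  apply/setP => -[[]|j]; rewrite !inE //=.
  have E : forall a b : 'I_n, (inr a == inr b :> unit + 'I_n) = (a == b) by [].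
  have -> : cycle_adj i j = (j == ordS i) || (i == ordS j) by [].
  by rewrite !E predS_eq.
have h1 : i != ordS i.
  apply/negP => /eqP /(congr1 val); rewrite ordS_val; case: eqP => /=; lia.
have h2 : i != ord_pred i.
  apply/negP => /eqP /(congr1 val); rewrite ord_pred_val; case: eqP => /=; lia.
have h3 : ordS i != ord_pred i.
  apply/negP => /eqP /(congr1 val); rewrite ordS_val ord_pred_val.
  have := ltn_ord i; case: eqP; case: eqP => /=; lia.
have E : forall a b : 'I_n, (inr a == inr b :> unit + 'I_n) = (a == b) by [].
rewrite !big_setU1 ?big_set1 // !inE //= ?E.
all: by rewrite ?negb_or ?E ?h1 ?h2 ?h3.
Qed.

Definition mkF n (g : nat -> int) : unit + 'I_n -> int :=
  fun x => match x with inl _ => 2 | inr j => g (val j) end.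

Lemma mkF_weight n g : weight (@mkF n g) = 2 + \sum_(0 <= j < n) g j.
Proof. by rewrite weightE big_mkord. Qed.

Lemma mem3 (x : int) : x \in [:: -1; 1; 2] -> [\/ x = -1, x = 1 | x = 2].
Proof. by rewrite !inE => /or3P [] /eqP; [constructor 1|constructor 2|constructor 3]. Qed.

Lemma mkF_SRDF n g : (2 < n)%N -> (forall j, g j \in [:: -1; 1; 2]) ->
  1 <= 2 + \sum_(0 <= j < n) g j ->
  (forall i, (i < n)%N -> -1 <= g (if i == 0%N then n.-1 else i.-1) + g i
                                + g (if i.+1 == n then 0%N else i.+1)) ->
  is_SRDF (@wheel_adj n) (@mkF n g).
Proof.
move=> n3 gv gs gw; split; [|split].
- by case=> [_|j] //=.
- case=> [[]|j]; first by rewrite hub_sum mkF_weight.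
  rewrite rim_sum // /mkF ordS_val ord_pred_val.
  have := gw j (ltn_ord j); change (\val j) with (nat_of_ord j); lia.
- case=> [_|j] //= _; by exists (inl tt).
Qed.

Definition fo (j : nat) : int := if odd j then 1 else -1.

Lemma fo_sum k : \sum_(0 <= j < k.*2) fo j = 0 /\ \sum_(0 <= j < k.*2.+1) fo j = -1.
Proof.
elim: k => [|k [_ IH]]; first by rewrite !big_nat_recr //= big_geq.
have E : \sum_(0 <= j < k.*2.+2) fo j = 0.
  by rewrite big_nat_recr //= IH /fo /= odd_double.
by rewrite doubleS E big_nat_recr //= E /fo /= odd_double.
Qed.

Lemma fo_SRDF n : (2 < n)%N -> is_SRDF (@wheel_adj n) (@mkF n fo).
Proof.
move=> n3; apply: mkF_SRDF => //.
- by move=> j; rewrite /fo; case: odd.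
- rewrite -(odd_double_half n); case: (odd n); rewrite /=.
    by case: (fo_sum n./2) => _ ->.
  by case: (fo_sum n./2) => -> _.
- case=> [|i] lt /=.
    have -> : (1 == n) = false by apply/eqP; lia.
    by rewrite /fo /=; case: odd.
  case: eqP => [e|ne].
    rewrite /fo /=; by case: odd.
  rewrite /fo /=; by case: odd.
Qed.

Definition ge (j : nat) : int :=
  if j == 0%N then 2 else if j == 2%N then -1 else if j == 3%N then 1
  else if j == 4%N then -1 else if odd j then -1 else 1.

Lemma ge_lb j : -1 <= ge j.
Proof. rewrite /ge; do 4 case: (_ == _) => //; by case: odd. Qed.

Lemma ge_sum k : \sum_(0 <= j < 6 + k.*2) ge j = -1.
Proof.

elim: k => [|k IH]; first by rewrite !big_nat_recr //= big_geq.
have -> : (6 + k.+1.*2 = (6 + k.*2).+2)%N by rewrite doubleS addnS addnS.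
rewrite big_nat_recr // big_nat_recr // IH /ge /= odd_double; by [].
Qed.

Lemma ge_SRDF k : is_SRDF (@wheel_adj (6 + k.*2)) (@mkF (6 + k.*2) ge).
Proof.
apply: mkF_SRDF => //.
- move=> j; rewrite /ge; do 4 case: (_ == _) => //; by case: odd.
- by rewrite ge_sum.
- case=> [|i] lt /=.
    have := ge_lb (5 + k.*2); have -> : ge 0 = 2 by []; have -> : ge 1 = -1 by []; lia.
  case: eqP => [e|ne].
    have := ge_lb i; have := ge_lb i.+1; have -> : ge 0 = 2 by []; lia.
  do 5?[case: i lt ne => [|i] lt ne; first by []].
  rewrite /ge /=; by case: odd.
Qed.

Local Close Scope ring_scope.

Theorem mainTheorem12 :
  gamma_sR_is (@wheel_adj 4) 2%:Z /\
  (forall n : nat, 3 <= n -> n <> 4 -> gamma_sR_is (@wheel_adj n) 1%:Z).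
Proof.
split.
  split.
    exists (@mkF 4 fo); split; first exact: fo_SRDF.
    by rewrite mkF_weight; case: (fo_sum 2) => ->.
  move=> f [hv [hs _]].
  pose b (k : nat) := f (inr (inord k : 'I_4)).
  have fE : forall j : 'I_4, f (inr j) = b (val j) by move=> j; rewrite /b inord_val.
  have W : weight f = (f (inl tt) + b 0%N + b 1%N + b 2%N + b 3%N)%R.
    rewrite weightE (eq_bigr (fun j : 'I_4 => b (val j))); last by move=> j _; rewrite fE.
    rewrite -(big_mkord xpredT b) !big_nat_recr //= big_geq //; lia.
  have h0 := hs (inl tt); rewrite hub_sum W in h0.
  have hk : forall k, (k < 4)%N -> (1 <= f (inl tt) + (b k + (b (if k.+1 == 4 then 0 else k.+1)%N
                 + b (if k == 0 then 3 else k.-1)%N)))%R.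
    move=> k lt; have := hs (inr (inord k)); rewrite rim_sum // !fE ordS_val ord_pred_val /= inordK //.
  have := hk 0%N isT; have := hk 1%N isT; have := hk 2%N isT; have := hk 3%N isT => /=.
  move: (mem3 (hv (inl tt))) (mem3 (hv (inr (inord 0)))) (mem3 (hv (inr (inord 1))))
        (mem3 (hv (inr (inord 2)))) (mem3 (hv (inr (inord 3)))).
  rewrite -/(b 0%N) -/(b 1%N) -/(b 2%N) -/(b 3%N) W.
  move=> [] p [] p1 [] p2 [] p3 [] p4; move: h0; rewrite p p1 p2 p3 p4; vm_compute; intros; (reflexivity || discriminate).
move=> n n3 n4; split; last first.
  by move=> f [_ [hs _]]; have := hs (inl tt); rewrite hub_sum.
case/boolP: (odd n) => on.
  exists (@mkF n fo); split; first exact: fo_SRDF.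
  rewrite mkF_weight -(odd_double_half n) on /=.
  by case: (fo_sum n./2) => _ ->.
have e : n = (n./2).*2 by rewrite -[LHS](odd_double_half n) (negbTE on).
have [k ek] : exists k, n = (6 + k.*2)%N by exists (n./2 - 3)%N; lia.
subst n; exists (@mkF (6 + k.*2) ge); split; first exact: ge_SRDF.
by rewrite mkF_weight ge_sum.
Qed.
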